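(* Let $(M,d)$ be a metric space, $\mathsf{P}\subseteq M$ a set of $n$ points, $1\le\ell\le k\le n$ integers and $m=\lfloor k/\ell\rfloor$. Let $r_{\mathrm{cen}}=\min_{S\subseteq\mathsf{P},|S|=m}\max_{p\in\mathsf{P}} d_S(p,1)$ and $r_{\mathrm{opt}}=\min_{C'\subseteq\mathsf{P},|C'|=k}\max_{p\in\mathsf{P}} d_{C'}(p,\ell)$. Then $r_{\mathrm{cen}}\le 2r_{\mathrm{opt}}$.
   Context: For a finite set $S\subseteq M$, a point $p\in M$ and an integer $1\le i\le|S|$, $d_S(p,i)$ denotes the radius of the smallest closed ball centered at $p$ containing at least $i$ points of $S$. *)

(* Defs.v *)
From HB Require Import structures.
From mathcomp Require Import all_boot all_order all_algebra.
Set Implicit Arguments. Unset Strict Implicit. Unset Printing Implicit Defensive.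
Import Order.TTheory GRing.Theory Num.Theory.
Local Open Scope ring_scope.

Definition is_metric (R : realFieldType) (M : Type) (d : M -> M -> R) : Prop :=
  [/\ forall x y, d x y = 0 <-> x = y,
      forall x y, d x y = d y x &
      forall x y z, d x z <= d x y + d y z].

Definition seqmin (R : realFieldType) (s : seq R) : R :=
  foldr Num.min (head 0 s) s.
Definition seqmax (R : realFieldType) (s : seq R) : R :=
  foldr Num.max (head 0 s) s.

(* The point set P = {pts j | j < n}; subsets of P are {set 'I_n}.
   d_S(p,i): radius of the smallest closed ball centered at p containing at
   least i points of S.  The smallest such radius is always one of the
   distances d p s, s in S, so it is the minimum over those candidate radii r
   for which the ball of radius r contains at least i points of S. *)
Definition dS (R : realFieldType) (M : Type) (d : M -> M -> R) (n : nat)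
    (pts : 'I_n -> M) (S : {set 'I_n}) (p : M) (i : nat) : R :=
  seqmin [seq r <- [seq d p (pts s) | s in S]
         | (i <= #|[set t in S | (d p (pts t) <= r)%R]|)%N].

Definition cost (R : realFieldType) (M : Type) (d : M -> M -> R) (n : nat)
    (pts : 'I_n -> M) (S : {set 'I_n}) (i : nat) : R :=
  seqmax [seq dS d pts S (pts p) i | p : 'I_n].

Definition best_cost (R : realFieldType) (M : Type) (d : M -> M -> R) (n : nat)
    (pts : 'I_n -> M) (size i : nat) : R :=
  seqmin [seq cost d pts C i | C <- enum [pred C : {set 'I_n} | #|C| == size]].

Definition r_cen (R : realFieldType) (M : Type) (d : M -> M -> R) (n : nat)
    (pts : 'I_n -> M) (k l : nat) : R :=
  best_cost d pts (k %/ l) 1.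
Definition r_opt (R : realFieldType) (M : Type) (d : M -> M -> R) (n : nat)
    (pts : 'I_n -> M) (k l : nat) : R :=
  best_cost d pts k l.

(* Main.v *)
Require Import Defs.
From HB Require Import structures.
From mathcomp Require Import all_boot all_order all_algebra.
From mathcomp Require Import lra.
Import Order.TTheory GRing.Theory Num.Theory.
Local Open Scope ring_scope.

Section S.
Variable R : realFieldType.

Lemma foldr_min_mem (a : R) s : foldr Num.min a s \in a :: s.
Proof.
elim: s => [|x s IH] /=; first by rewrite inE.
rewrite /Num.min; case: ifP => _; first by rewrite !inE eqxx orbT.
move: IH; rewrite !inE => /orP[->//|->]; by rewrite !orbT.
Qed.

Lemma foldr_min_le (a : R) s x : x \in s -> foldr Num.min a s <= x.
Proof.
elim: s => [|y s IH] //=; rewrite inE => /orP[/eqP->|/IH h].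
  by rewrite ge_min lexx.
by rewrite ge_min h orbT.
Qed.

Lemma foldr_max_mem (a : R) s : foldr Num.max a s \in a :: s.
Proof.
elim: s => [|x s IH] /=; first by rewrite inE.
rewrite /Num.max; case: ifP => _; last by rewrite !inE eqxx orbT.
move: IH; rewrite !inE => /orP[->//|->]; by rewrite !orbT.
Qed.

Lemma foldr_max_ge (a : R) s x : x \in s -> x <= foldr Num.max a s.
Proof.
elim: s => [|y s IH] //=; rewrite inE => /orP[/eqP->|/IH h].
  by rewrite le_max lexx.
by rewrite le_max h orbT.
Qed.

Lemma seqmin_le s (x : R) : x \in s -> seqmin s <= x.
Proof. exact: foldr_min_le. Qed.
Lemma seqmin_mem (s : seq R) : s != [::] -> seqmin s \in s.
Proof.
case: s => [//|y s] _; change (foldr Num.min y (y::s) \in y :: s).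
have := foldr_min_mem y (y :: s); rewrite inE => /orP[/eqP->|//].
by rewrite inE eqxx.
Qed.
Lemma seqmax_ge s (x : R) : x \in s -> x <= seqmax s.
Proof. exact: foldr_max_ge. Qed.
Lemma seqmax_mem (s : seq R) : s != [::] -> seqmax s \in s.
Proof.
case: s => [//|y s] _; change (foldr Num.max y (y::s) \in y :: s).
have := foldr_max_mem y (y :: s); rewrite inE => /orP[/eqP->|//].
by rewrite inE eqxx.
Qed.
Variables (M : Type) (d : M -> M -> R) (n : nat) (pts : 'I_n -> M).

Lemma dS_le (S : {set 'I_n}) p i s : s \in S ->
  (i <= #|[set t in S | (d p (pts t) <= d p (pts s))%R]|)%N ->
  dS d pts S p i <= d p (pts s).
Proof.
move=> sS hi; apply: seqmin_le; rewrite mem_filter hi /=.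
by apply: map_f; rewrite mem_enum.
Qed.

Lemma dS_spec (S : {set 'I_n}) p i : (0 < i)%N -> (i <= #|S|)%N ->
  (i <= #|[set t in S | (d p (pts t) <= dS d pts S p i)%R]|)%N.
Proof.
move=> i0 iS.
set L := [seq d p (pts s) | s in S].
have [s0 s0S] : exists s, s \in S by apply/card_gt0P; exact: leq_trans iS.
have LN : L != [::].
  apply/eqP => h; have : d p (pts s0) \in L by apply: map_f; rewrite mem_enum.
  by rewrite h.
have hx : (i <= #|[set t in S | (d p (pts t) <= seqmax L)%R]|)%N.
  apply: (leq_trans iS); apply: subset_leq_card; apply/subsetP => t tS.
  rewrite inE tS /=; apply: seqmax_ge; by apply: map_f; rewrite mem_enum.
have FN : [seq r <- L | (i <= #|[set t in S | (d p (pts t) <= r)%R]|)%N] != [::].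
  apply/eqP => h.
  have : seqmax L \in [seq r <- L | (i <= #|[set t in S | (d p (pts t) <= r)%R]|)%N].
    by rewrite mem_filter hx seqmax_mem.
  by rewrite h.
have := seqmin_mem _ FN; rewrite mem_filter => /andP[h _]; exact: h.
Qed.

Lemma cost_ge (S : {set 'I_n}) i p : dS d pts S (pts p) i <= cost d pts S i.
Proof. apply: seqmax_ge; apply: map_f; by rewrite mem_enum. Qed.

Lemma cost_le (S : {set 'I_n}) i B : (0 < n)%N ->
  (forall p, dS d pts S (pts p) i <= B) -> cost d pts S i <= B.
Proof.
move=> n0 h.
have LN : [seq dS d pts S (pts p) i | p : 'I_n] != [::].
  apply/eqP => e.
  have p0 : 'I_n by exists 0%N.
  have : dS d pts S (pts p0) i \in [seq dS d pts S (pts p) i | p : 'I_n].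
    by apply: map_f; rewrite mem_enum.
  by rewrite e.
rewrite /cost; have := seqmax_mem _ LN; move=> /mapP[p _ ->]; exact: h.
Qed.

Lemma best_le (C : {set 'I_n}) sz i : #|C| = sz -> best_cost d pts sz i <= cost d pts C i.
Proof.
move=> hC; apply: seqmin_le; apply: map_f; by rewrite mem_enum inE hC.
Qed.

Lemma superset (S : {set 'I_n}) m : (#|S| <= m)%N -> (m <= n)%N ->
  exists S' : {set 'I_n}, S \subset S' /\ #|S'| = m.
Proof.
move=> h1 h2; move e: (m - #|S|)%N => k.
elim: k S h1 e => [|k IH] S h1 e.
  exists S; split => //; apply/eqP; rewrite eqn_leq h1 /=; by rewrite -subn_eq0 e.
have hlt : (#|S| < #|'I_n|)%N by rewrite card_ord; apply: leq_trans h2; rewrite -subn_gt0 e.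
have [x xS] : exists x, x \notin S.
  have : (0 < #|~: S|)%N.
    by move: hlt (cardsC S); rewrite card_ord => hl hc; rewrite -(ltn_add2l #|S|) addn0 hc.
  by move=> /card_gt0P[x]; rewrite inE => ?; exists x.
have [S' [sub cS']] : exists S' : {set 'I_n}, (x |: S) \subset S' /\ #|S'| = m.
  apply: IH.
  - rewrite cardsU1 xS /=; by rewrite -subn_gt0 e.
  - by rewrite cardsU1 xS /= add1n subnS e.
exists S'; split => //; apply: subset_trans sub; exact: subsetUr.
Qed.

Lemma best_mem sz i : (sz <= n)%N ->
  exists C : {set 'I_n}, #|C| = sz /\ best_cost d pts sz i = cost d pts C i.
Proof.
move=> h.
have h0 : (#|(set0 : {set 'I_n})| <= sz)%N by rewrite cards0.
have [C [_ hC]] := superset _ _ h0 h.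
rewrite /best_cost.
set L := enum _.
have LN : [seq cost d pts C0 i | C0 <- L] != [::].
  apply/eqP => e; have : cost d pts C i \in [seq cost d pts C0 i | C0 <- L].
    by apply: map_f; rewrite mem_enum inE hC.
  by rewrite e.
have := seqmin_mem _ LN; move=> /mapP[C0]; rewrite mem_enum inE => /eqP e1 e2.
by exists C0.
Qed.
End S.

Lemma card_sum (n : nat) (A : {set 'I_n}) (P : pred 'I_n) :
  #|[set x in A | P x]| = (\sum_(x in A) (P x : nat))%N.
Proof.
rewrite -sum1_card [RHS]big_mkcond [LHS]big_mkcond; apply: eq_bigr => x _.
by rewrite inE; case: (x \in A); case: (P x).
Qed.

Theorem mainTheorem7 (R : realFieldType) (M : Type) (d : M -> M -> R)
    (n : nat) (pts : 'I_n -> M) (k l : nat) :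
  is_metric d -> injective pts ->
  (1 <= l)%N -> (l <= k)%N -> (k <= n)%N ->
  r_cen d pts k l <= 2 * r_opt d pts k l.
Proof.
move=> [d0 dsym dtri] _ l1 lk kn.
have n0 : (0 < n)%N by apply: leq_trans kn; apply: leq_trans lk.
have dxx : forall x, d x x = 0 by move=> x; apply/d0.
have dge0 : forall x y, 0 <= d x y.
  move=> x y; have := dtri x y x; rewrite dxx (dsym y x) => h; lra.
rewrite /r_opt /r_cen.
have [C [hC ->]] := best_mem _ _ d _ pts k l kn.
set r := cost d pts C l.
have ball : forall p : 'I_n, (l <= #|[set t in C | (d (pts p) (pts t) <= r)%R]|)%N.
  move=> p; have lC : (l <= #|C|)%N by rewrite hC.
  apply: leq_trans (dS_spec _ _ d _ pts C (pts p) l l1 lC) _.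
  apply: subset_leq_card; apply/subsetP => t; rewrite !inE => /andP[-> h] /=.
  exact: le_trans h (cost_ge _ _ _ _ _ _ _ _).
have r0 : 0 <= r.
  have /card_gt0P[t] := leq_trans l1 (ball (Ordinal n0)).
  rewrite inE => /andP[_ h]; exact: le_trans (dge0 _ _) h.
pose good (S : {set 'I_n}) := [forall x, forall y,
  ((x \in S) && (y \in S) && (x != y)) ==> (2 * r < d (pts x) (pts y))].
have g0 : good set0 by apply/forallP => x; apply/forallP => y; rewrite inE.
case: (@arg_maxnP _ set0 good (fun S => #|S|) g0) => S gS maxS.
have cover : forall p, exists2 s, s \in S & d (pts p) (pts s) <= 2 * r.
  move=> p; case: (boolP [exists s in S, d (pts p) (pts s) <= 2 * r]).
    by move=> /exists_inP[s sS h]; exists s.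
  move=> /exists_inPn hn; exfalso.
  have pS : p \notin S.
    apply/negP => pS; move: (hn p pS); rewrite dxx; move/negP; apply; lra.
  have : good (p |: S).
    apply/forallP => x; apply/forallP => y; apply/implyP; rewrite !inE.
    move=> /andP[/andP[hx hy] nxy].
    case/orP: hx => [/eqP ex|xS]; case/orP: hy => [/eqP ey|yS].
    - by subst; rewrite eqxx in nxy.
    - by subst; rewrite ltNge hn.
    - by subst; rewrite dsym ltNge hn.
    - by move/forallP: gS => /(_ x) /forallP /(_ y); rewrite xS yS nxy.
  by move=> /maxS; rewrite cardsU1 pS /= add1n ltnn.
have cardS : (#|S| * l <= k)%N.
  rewrite -hC -sum_nat_const.
  apply: (@leq_trans (\sum_(s in S) #|[set t in C | (d (pts s) (pts t) <= r)%R]|)%N).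
    by apply: leq_sum => s _; exact: ball s.
  under eq_bigr => s _ do rewrite card_sum.
  rewrite exchange_big /= -sum1_card; apply: leq_sum => t _.
  rewrite -card_sum; apply/card_le1_eqP => s1 s2; rewrite !inE.
  move=> /andP[s1S h1] /andP[s2S h2]; case: (eqVneq s1 s2) => [->//|ne]; exfalso.
  move/forallP: gS => /(_ s1) /forallP /(_ s2); rewrite s1S s2S ne /=.
  have := dtri (pts s1) (pts t) (pts s2); rewrite (dsym (pts t)) => h3 h4.
  rewrite (mulr_natl r 2) mulr2n in h4; have := lt_le_trans h4 (le_trans h3 (lerD h1 h2)).
  by rewrite ltxx.
have Sm : (#|S| <= k %/ l)%N by rewrite leq_divRL.
have [S' [sub cS']] := superset _ S _ Sm (leq_trans (leq_div k l) kn).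
apply: le_trans (best_le _ _ d _ pts S' _ 1 cS') _.
apply: (cost_le _ _ d _ pts S' 1 _ n0) => p.
have [s sS hs] := cover p.
apply: le_trans hs; apply: (dS_le _ _ d _ pts S' (pts p) 1 s); first exact: (subsetP sub).
rewrite card_gt0; apply/set0Pn; exists s; by rewrite inE (subsetP sub) //= lexx.
Qed.
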